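(* Let $A$ be an algebra of Jordan type half over an algebraically closed field $\mathbb{F}$ of characteristic not $2$, let $a,b\in A$ be primitive axes with $\alpha=(a,b)\notin\{0,\frac14,1\}$, let $J=\langle\langle a,b\rangle\rangle$, and let $A=\bigoplus_{n\in\mathbb{Z}}A_n$ be the $\mathbb{Z}$-grading defined below. For $\xi\in\mathbb{F}\setminus\{0\}$ let $\phi_\xi:A\to A$ be the linear map acting as $\xi^n$ on $A_n$ for each $n$, and let $\Phi=\{\phi_\xi:\xi\in\mathbb{F}\setminus\{0\}\}$ (a group of automorphisms of $A$). Then $\Phi$ acts transitively on the set of idempotents of $J$ other than $0$ and $1_J$.
   Context: All algebras are commutative, not necessarily associative; $A_\lambda(x)=\{u:xu=\lambda u\}$, $\mathrm{ad}_x(u)=xu$. A primitive axis of Jordan type half is $x\neq0$, $x^2=x$, $A=A_1(x)\oplus A_0(x)\oplus A_{1/2}(x)$, $A_1(x)=\mathbb{F}x$, with fusion rules $A_1A_1\subseteq A_1$, $A_1A_0=0$, $A_0A_0\subseteq A_0$, $A_1A_{1/2},A_0A_{1/2}\subseteq A_{1/2}$, $A_{1/2}A_{1/2}\subseteq A_1\oplus A_0$. An algebra of Jordan type half is generated by such axes and has a unique Frobenius form $(\cdot,\cdot)$ (bilinear, $(uv,w)=(u,vw)$, $(x,x)=1$ for primitive axes). The grading: let $\zeta$ be a root of $x^2-(4\alpha-2)x+1$, $\mu=-\frac{1+\zeta}{4}$, $\nu=-\frac{1+\zeta^{-1}}{4}$, $s=\frac{1}{4(\alpha-1)}(\mu a+ab+\nu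 b)$, $t=\frac{1}{\alpha(\alpha-1)}(\nu a+ab+\mu b)$, $1_J=\frac{2}{\alpha-1}(ab-\frac12a-\frac12b)$ (the identity of $J$), $W=\{w\in A:(w,J)=0\}$, $\omega=\mathrm{ad}_s|_W$, $\chi=\mathrm{ad}_t|_W$; $A_{-2}=\mathbb{F}s$, $A_{-1}=\mathrm{im}\,\omega$, $A_0=\mathbb{F}1_J\oplus(\ker\omega\cap\ker\chi)$, $A_1=\mathrm{im}\,\chi$, $A_2=\mathbb{F}t$, $A_k=0$ otherwise; this is a direct sum decomposition of $A$ with $A_nA_m\subseteq A_{n+m}$. *)

(* Defs.v *)
From HB Require Import structures.
From mathcomp Require Import all_boot all_order all_algebra.
Set Implicit Arguments. Unset Strict Implicit. Unset Printing Implicit Defensive.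
Import Order.TTheory GRing.Theory Num.Theory.
Local Open Scope ring_scope.

Section JordanHalf.
Variables (F : fieldType) (A : lmodType F).
Variable mul : A -> A -> A.
Variable form : A -> A -> F.

Definition comm_bilinear_product : Prop :=
  (forall u v, mul u v = mul v u) /\
  (forall c u v w, mul u (c *: v + w) = c *: mul u v + mul u w).

Definition eigsp (x : A) (l : F) (u : A) : Prop := mul x u = l *: u.

Definition half : F := (2%:R)^-1.

Definition prim_axis_half (x : A) : Prop :=
  [/\ x != 0, mul x x = x,
   (forall u, exists u1 u0 uh, u = u1 + u0 + uh /\
      [/\ eigsp x 1 u1, eigsp x 0 u0 & eigsp x half uh]),
   (forall u, eigsp x 1 u -> exists c, u = c *: x) &
   ((forall u v, eigsp x 1 u -> eigsp x 1 v -> eigsp x 1 (mul u v)) /\ [/\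
       (forall u v, eigsp x 1 u -> eigsp x 0 v -> mul u v = 0),
       (forall u v, eigsp x 0 u -> eigsp x 0 v -> eigsp x 0 (mul u v)),
       (forall u v, eigsp x 1 u -> eigsp x half v -> eigsp x half (mul u v)),
       (forall u v, eigsp x 0 u -> eigsp x half v -> eigsp x half (mul u v)) &
       (forall u v, eigsp x half u -> eigsp x half v ->
          exists w1 w0, mul u v = w1 + w0 /\ eigsp x 1 w1 /\ eigsp x 0 w0)])].

Definition subalg_closed (S : A -> Prop) : Prop :=
  [/\ S 0, (forall u v, S u -> S v -> S (u + v)),
      (forall (c : F) u, S u -> S (c *: u)) &
      (forall u v, S u -> S v -> S (mul u v))].

Definition generated (X : A -> Prop) (u : A) : Prop :=
  forall S, subalg_closed S -> (forall x, X x -> S x) -> S u.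

Definition jordan_half_algebra : Prop :=
  comm_bilinear_product /\
  exists X : A -> Prop, (forall x, X x -> prim_axis_half x) /\
                        (forall u, generated X u).

Definition frobenius_form : Prop :=
  [/\ (forall c u v w, form (c *: u + v) w = c * form u w + form v w),
      (forall c u v w, form u (c *: v + w) = c * form u v + form u w),
      (forall u v w, form (mul u v) w = form u (mul v w)) &
      (forall x, prim_axis_half x -> form x x = 1)].

Variables (a b : A) (zeta : F).

Definition alpha : F := form a b.
Definition mu : F := - (1 + zeta) / 4%:R.
Definition nu : F := - (1 + zeta^-1) / 4%:R.
Definition s_el : A := (4%:R * (alpha - 1))^-1 *: (mu *: a + mul a b + nu *: b).
Definition t_el : A := (alpha * (alpha - 1))^-1 *: (nu *: a + mul a b + mu *: b).
Definition oneJ : A := (2%:R / (alpha - 1)) *: (mul a b - half *: a - half *: b).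

Definition inJ (u : A) : Prop := generated (fun x => x = a \/ x = b) u.

Definition inW (w : A) : Prop := forall j, inJ j -> form w j = 0.

Definition grade (n : int) (u : A) : Prop :=
  match n with
  | Negz 1 => exists c : F, u = c *: s_el                      (* n = -2 *)
  | Negz 0 => exists w, inW w /\ u = mul s_el w                (* n = -1 *)
  | Posz 0 => exists (c : F) w, [/\ inW w, mul s_el w = 0, mul t_el w = 0
                                   & u = c *: oneJ + w]
  | Posz 1 => exists w, inW w /\ u = mul t_el w
  | Posz 2 => exists c : F, u = c *: t_el
  | _ => u = 0
  end.

Definition is_phi (xi : F) (phi : A -> A) : Prop :=
  (forall (c : F) u v, phi (c *: u + v) = c *: phi u + phi v) /\
  (forall (n : int) u, grade n u -> phi u = (xi ^ n) *: u).

Definition nontriv_idem_J (e : A) : Prop :=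
  [/\ inJ e, mul e e = e, e != 0 & e != oneJ].

End JordanHalf.

(* Main.v *)
Require Import Defs.
From HB Require Import structures.
From mathcomp Require Import all_boot all_order all_algebra.
From mathcomp Require Import ring.
Set Implicit Arguments. Unset Strict Implicit. Unset Printing Implicit Defensive.
Import Order.TTheory GRing.Theory Num.Theory.
Local Open Scope ring_scope.

Section Lc.
Variables (F : fieldType) (A : lmodType F).

Fixpoint lc (cs : seq F) (us : seq A) : A :=
  match cs, us with c :: cs', u :: us' => c *: u + lc cs' us' | _, _ => 0 end.
Fixpoint addl (cs ds : seq F) : seq F :=
  match cs, ds with
  | c :: cs', d :: ds' => (c + d) :: addl cs' ds'
  | [::], _ => ds
  | _, [::] => cs end.

Lemma lcD cs ds us : lc cs us + lc ds us = lc (addl cs ds) us.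
Proof.
elim: cs ds us => [|c cs IH] [|d ds] [|u us] //=; rewrite ?add0r ?addr0 //.
by rewrite -IH scalerDl addrACA.
Qed.

Lemma lcZ k cs us : k *: lc cs us = lc (map (fun c => k * c) cs) us.
Proof.
elim: cs us => [|c cs IH] [|u us] /=; rewrite ?scaler0 //.
by rewrite scalerDr scalerA IH.
Qed.

Lemma lc_map (f : A -> A) cs us :
  (forall c u v, f (c *: u + v) = c *: f u + f v) ->
  f (lc cs us) = lc cs (map f us).
Proof.
move=> fL.
have f0 : f 0 = 0.
  have := fL 1 0 0; rewrite scaler0 addr0 scale1r => /(congr1 (fun x => x - f 0)).
  by rewrite addrK subrr.
elim: cs us => [|c cs IH] [|u us] //=. by rewrite fL IH.
Qed.
End Lc.

Arguments lc : simpl never.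

Section Lc2.
Variables (F : fieldType) (A : lmodType F).
Lemma lc_cons (c : F) cs (u : A) us : lc (c :: cs) (u :: us) = c *: u + lc cs us.
Proof. by []. Qed.
Lemma lc_nil (us : seq A) : lc [::] us = 0.
Proof. by case: us. Qed.
Lemma lcN (cs : seq F) (us : seq A) : - lc cs us = lc (map (fun c => -1 * c) cs) us.
Proof. by rewrite -lcZ scaleN1r. Qed.

Lemma toV3 (u1 u2 u3 : A) (P : A -> A -> A -> Prop) :
  P (lc [:: 1; 0; 0] [:: u1; u2; u3]) (lc [:: 0; 1; 0] [:: u1; u2; u3])
    (lc [:: 0; 0; 1] [:: u1; u2; u3]) -> P u1 u2 u3.
Proof. by rewrite !lc_cons lc_nil !scale1r !scale0r !addr0 !add0r. Qed.

Lemma toV4 (u1 u2 u3 u4 : A) (P : A -> A -> A -> A -> Prop) :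
  P (lc [:: 1; 0; 0; 0] [:: u1; u2; u3; u4]) (lc [:: 0; 1; 0; 0] [:: u1; u2; u3; u4])
    (lc [:: 0; 0; 1; 0] [:: u1; u2; u3; u4]) (lc [:: 0; 0; 0; 1] [:: u1; u2; u3; u4]) ->
  P u1 u2 u3 u4.
Proof. by rewrite !lc_cons lc_nil !scale1r !scale0r !addr0 !add0r. Qed.

Lemma toV6 (u1 u2 u3 u4 u5 u6 : A) (P : A -> A -> A -> A -> A -> A -> Prop) :
  let us := [:: u1; u2; u3; u4; u5; u6] in
  P (lc [:: 1; 0; 0; 0; 0; 0] us) (lc [:: 0; 1; 0; 0; 0; 0] us)
    (lc [:: 0; 0; 1; 0; 0; 0] us) (lc [:: 0; 0; 0; 1; 0; 0] us)
    (lc [:: 0; 0; 0; 0; 1; 0] us) (lc [:: 0; 0; 0; 0; 0; 1] us) ->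
  P u1 u2 u3 u4 u5 u6.
Proof. by rewrite /= !lc_cons lc_nil !scale1r !scale0r !addr0 !add0r. Qed.
End Lc2.

Ltac lcnorm := rewrite ?(lcN, lcZ, lcD) /=.



Section Alg.
Variables (F : fieldType) (A : lmodType F) (mul : A -> A -> A) (form : A -> A -> F).
Hypothesis Hcb : comm_bilinear_product mul.
Hypothesis Hfr : frobenius_form mul form.
Hypothesis H2 : (2%:R : F) != 0.

Lemma mulC u v : mul u v = mul v u.
Proof. by case: Hcb. Qed.
Lemma mulL u c v w : mul u (c *: v + w) = c *: mul u v + mul u w.
Proof. by case: Hcb. Qed.
Lemma mulR u c v w : mul (c *: v + w) u = c *: mul v u + mul w u.
Proof. by rewrite mulC mulL -!(mulC u). Qed.
Lemma mulv0 u : mul u 0 = 0.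
Proof.
have := mulL u 1 0 0; rewrite scaler0 addr0 scale1r => /(congr1 (fun x => x - mul u 0)).
by rewrite addrK subrr.
Qed.
Lemma mul0v u : mul 0 u = 0.
Proof. by rewrite mulC mulv0. Qed.
Lemma mul_lcr u cs us : mul u (lc cs us) = lc cs (map (mul u) us).
Proof. by apply: lc_map => c v w; rewrite mulL. Qed.
Lemma mul_lcl u cs us : mul (lc cs us) u = lc cs (map (mul^~ u) us).
Proof. by apply: lc_map => c v w; rewrite mulR. Qed.
Lemma mulDr u v w : mul u (v + w) = mul u v + mul u w.
Proof. by move: (mulL u 1 v w); rewrite !scale1r. Qed.
Lemma mulZr u c v : mul u (c *: v) = c *: mul u v.
Proof. by rewrite -[c *: v]addr0 mulL mulv0 addr0. Qed.
Lemma mulDl u v w : mul (v + w) u = mul v u + mul w u.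
Proof. by rewrite !(mulC _ u) mulDr. Qed.
Lemma mulZl u c v : mul (c *: v) u = c *: mul v u.
Proof. by rewrite !(mulC _ u) mulZr. Qed.
Lemma mulNr u v : mul u (- v) = - mul u v.
Proof. by rewrite -scaleN1r mulZr scaleN1r. Qed.
Lemma mulNl u v : mul (- v) u = - mul v u.
Proof. by rewrite -scaleN1r mulZl scaleN1r. Qed.
Lemma mulBr u v w : mul u (v - w) = mul u v - mul u w.
Proof. by rewrite mulDr mulNr. Qed.
Lemma mulBl u v w : mul (v - w) u = mul v u - mul w u.
Proof. by rewrite mulDl mulNl. Qed.

Lemma formR u c v w : form u (c *: v + w) = c * form u v + form u w.
Proof. by case: Hfr. Qed.
Lemma formL u c v w : form (c *: v + w) u = c * form v u + form w u.
Proof. by case: Hfr. Qed.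
Lemma formA u v w : form (mul u v) w = form u (mul v w).
Proof. by case: Hfr. Qed.
Lemma formr0 u : form u 0 = 0.
Proof.
have := formR u 1 0 0; rewrite scaler0 addr0 mul1r => /(congr1 (fun x => x - form u 0)).
by rewrite addrK subrr.
Qed.
Lemma form0r u : form 0 u = 0.
Proof.
have := formL u 1 0 0; rewrite scaler0 addr0 mul1r => /(congr1 (fun x => x - form 0 u)).
by rewrite addrK subrr.
Qed.
Lemma formDr u v w : form u (v + w) = form u v + form u w.
Proof. by move: (formR u 1 v w); rewrite scale1r mul1r. Qed.
Lemma formZr u c v : form u (c *: v) = c * form u v.
Proof. by rewrite -[c *: v]addr0 formR formr0 addr0. Qed.
Lemma formDl u v w : form (v + w) u = form v u + form w u.
Proof. by move: (formL u 1 v w); rewrite scale1r mul1r. Qed.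
Lemma formZl u c v : form (c *: v) u = c * form v u.
Proof. by rewrite -[c *: v]addr0 formL form0r addr0. Qed.

Lemma half2 : (Defs.half F) + (Defs.half F) = 1.
Proof. rewrite /Defs.half; by field. Qed.

Lemma eigD x l u v : eigsp mul x l u -> eigsp mul x l v -> eigsp mul x l (u + v).
Proof. by rewrite /eigsp mulDr scalerDr => -> ->. Qed.
Lemma eigZ x l c u : eigsp mul x l u -> eigsp mul x l (c *: u).
Proof. by rewrite /eigsp mulZr => ->; rewrite !scalerA mulrC. Qed.
Lemma eigN x l u : eigsp mul x l u -> eigsp mul x l (- u).
Proof. by rewrite -scaleN1r; apply: eigZ. Qed.

Lemma eig_half_uniq x u1 u0 uh :
  eigsp mul x 1 u1 -> eigsp mul x 0 u0 -> eigsp mul x ((Defs.half F)) uh ->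
  u1 + u0 + uh = 0 -> uh = 0.
Proof.
move=> E1 E0 Eh S.
have S1 : u1 + (Defs.half F) *: uh = 0.
  have := congr1 (mul x) S; rewrite mulv0 !mulDr E1 E0 Eh scale1r scale0r addr0 //.
have S2 : u1 + ((Defs.half F) * (Defs.half F)) *: uh = 0.
  have := congr1 (mul x) S1; rewrite mulv0 !mulDr mulZr E1 Eh scale1r scalerA //.
have : ((Defs.half F) - (Defs.half F) * (Defs.half F)) *: uh = 0.
  by apply/eqP; rewrite scalerBl subr_eq0; apply/eqP; apply: (addrI u1); rewrite S1 S2.
move/eqP; rewrite scaler_eq0 => /orP [|/eqP //].
rewrite /Defs.half; move/eqP => H; exfalso.
have : (2%:R : F)^-1 * (1 - 2%:R^-1) = 0 by rewrite -H; ring.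
move/eqP; rewrite mulf_eq0 invr_eq0 (negbTE H2) /= subr_eq0 => /eqP H'.
have : (2%:R : F) = 1 by rewrite -[LHS]invrK -H' invr1.
move/eqP; rewrite -subr_eq0 (_ : (2%:R : F) - 1 = 1) ?oner_eq0 //; ring.
Qed.
Local Notation h := (Defs.half F).

Lemma h_neq0 : h != 0.
Proof. by rewrite /Defs.half invr_eq0. Qed.

Lemma axis x y : prim_axis_half mul x -> mul y y = y ->
  mul x (mul x y) = h *: mul x y + (h * form x y) *: x /\
  2%:R *: mul (y + form x y *: x - 2%:R *: mul x y) (mul x y - form x y *: x)
   = (1 - form x y) *: (mul x y - form x y *: x).
Proof.
move=> Hx yy; have Hxx1 : form x x = 1 by case: Hfr => _ _ _ ->.
case: (Hx) => [xn0 xx dec A1 [f11 [f10 f00 f1h f0h fhh]]].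
have [y1 [y0 [yh [Ey [E1 E0 Eh]]]]] := dec y.
have [k Ek] := A1 _ E1. subst y1.
have E0' : mul x y0 = 0 by rewrite E0 scale0r.
have Eh' : mul x yh = h *: yh by [].
have Ec : form x y = k.
  have F0 : form x y0 = 0 by rewrite -{1}xx formA // E0' formr0.
  have Fh : form x yh = 0.
    have : form x yh = h * form x yh by rewrite -{1}xx formA // Eh' formZr.
    move=> H; have : (1 - h) * form x yh = 0 by rewrite mulrBl mul1r -H subrr.
    have -> : 1 - h = h by rewrite /Defs.half; field.
    by move/eqP; rewrite mulf_eq0 (negbTE h_neq0) /= => /eqP.
  by rewrite Ey !formDr formZr Hxx1 mulr1 F0 Fh !addr0.
rewrite Ec.
have Eq : mul x y = k *: x + h *: yh.
  by rewrite Ey !mulDr mulZr xx E0' Eh' addr0.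
rewrite Eq; split.
  rewrite mulDr !mulZr xx Eh'.
  pattern x, yh, y0; apply: toV3; lcnorm; congr (lc _ _); congr [:: _; _; _]; rewrite /Defs.half; by field.
have Hm00 : eigsp mul x 0 (mul y0 y0) by apply: f00.
have Hm0h : eigsp mul x h (mul y0 yh) by apply: f0h.
have [w1 [w0 [Ew [Ew1 Ew0]]]] := fhh _ _ Eh Eh.
have [k2 Ek2] := A1 _ Ew1. subst w1.
have yy' := yy; rewrite Ey in yy'.
rewrite !mulDl !mulDr !mulZl !mulZr (mulC y0 x) (mulC yh x) (mulC yh y0) xx E0' Eh' Ew in yy'.
set m00 := mul y0 y0 in Hm00 yy'. set m0h := mul y0 yh in Hm0h yy' *.
have Em0h : mul y0 yh = m0h by [].
clearbody m00 m0h.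
have Hsum : (k - k * k - k2) *: x + (y0 - m00 - w0) + (yh - k *: yh - 2%:R *: m0h) = 0.
  rewrite -(subrr (k *: x + y0 + yh)) -{2}yy'.
  rewrite ?scaler0 ?addr0 ?add0r; pattern x, y0, yh, m00, m0h, w0; apply: toV6; lcnorm; congr (lc _ _).
  congr [:: _; _; _; _; _; _]; rewrite /Defs.half; by field.
have Hz : yh - k *: yh - 2%:R *: m0h = 0.
  apply: (@eig_half_uniq x _ _ _ _ _ _ Hsum).
  - by apply: eigZ; rewrite /eigsp xx scale1r.
  - by apply: eigD; [apply: eigD; [|apply: eigN]|apply: eigN].
  - by apply: eigD; [apply: eigD; [|apply: eigN; apply: eigZ]|apply: eigN; apply: eigZ].
have Hm : 2%:R *: m0h = (1 - k) *: yh.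
  move/eqP: Hz; rewrite subr_eq0 => /eqP <-; by rewrite scalerBl scale1r.
have e1 : k *: x + y0 + yh + k *: x - 2%:R *: (k *: x + h *: yh) = y0.
  pattern x, y0, yh; apply: toV3; lcnorm; congr (lc _ _); congr [:: _; _; _]; rewrite /Defs.half; by field.
have e2 : k *: x + h *: yh - k *: x = h *: yh by rewrite addrC addKr.
rewrite e2 Ey e1 mulZr Em0h scalerA mulrC -scalerA Hm !scalerA mulrC //.
Qed.

Lemma table a b : prim_axis_half mul a -> prim_axis_half mul b ->
  [/\ form b a = form a b,
      mul a (mul a b) = h *: mul a b + (h * form a b) *: a,
      mul b (mul a b) = h *: mul a b + (h * form a b) *: b &
      mul (mul a b) (mul a b) =
        (h * h * form a b) *: a + (h * h * form a b) *: b + (h * form a b) *: mul a b].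
Proof.
move=> Ha Hb.
have aa : mul a a = a by case: Ha.
have bb : mul b b = b by case: Hb.
have [Ha1 Ha2] := axis Ha bb.
have [Hb1 Hb2] := axis Hb aa.
have Eba : form b a = form a b.
  have -> : form b a = form b (mul b a) by rewrite -formA bb.
  have E : form a b = form b (mul b a).
    rewrite -{1}bb -formA mulC formA; congr (form b _); exact: mulC.
  by rewrite E.
rewrite Eba (mulC b a) in Hb1.
split => //.
move/eqP: Ha2; rewrite -subr_eq0 => /eqP H.
rewrite !(mulBl, mulDl, mulBr, mulDr, mulZl, mulZr, mulNl, mulNr) (mulC b a) (mulC (mul a b) a) Ha1 Hb1 aa in H.
rewrite -[RHS]addr0 -(scaler0 _ (- (h * h))) -H.
move: (mul (mul a b) (mul a b)) => P; move: (mul a b) H => p H.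
pattern a, b, p, P; apply: toV4; lcnorm; congr (lc _ _); congr [:: _; _; _; _]; rewrite /Defs.half; by field.
Qed.

Definition mco (T11 T12 T13 T22 T23 T33 : seq F) (c1 c2 c3 d1 d2 d3 : F) k :=
  c1 * d1 * T11`_k + (c1 * d2 + c2 * d1) * T12`_k + (c1 * d3 + c3 * d1) * T13`_k
  + c2 * d2 * T22`_k + (c2 * d3 + c3 * d2) * T23`_k + c3 * d3 * T33`_k.

Lemma mulV3 u1 u2 u3 T11 T12 T13 T22 T23 T33 :
  mul u1 u1 = lc [:: T11`_0; T11`_1; T11`_2] [:: u1; u2; u3] ->
  mul u1 u2 = lc [:: T12`_0; T12`_1; T12`_2] [:: u1; u2; u3] ->
  mul u1 u3 = lc [:: T13`_0; T13`_1; T13`_2] [:: u1; u2; u3] ->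
  mul u2 u2 = lc [:: T22`_0; T22`_1; T22`_2] [:: u1; u2; u3] ->
  mul u2 u3 = lc [:: T23`_0; T23`_1; T23`_2] [:: u1; u2; u3] ->
  mul u3 u3 = lc [:: T33`_0; T33`_1; T33`_2] [:: u1; u2; u3] ->
  forall c1 c2 c3 d1 d2 d3,
  mul (lc [:: c1; c2; c3] [:: u1; u2; u3]) (lc [:: d1; d2; d3] [:: u1; u2; u3]) =
  lc [:: mco T11 T12 T13 T22 T23 T33 c1 c2 c3 d1 d2 d3 0;
         mco T11 T12 T13 T22 T23 T33 c1 c2 c3 d1 d2 d3 1;
         mco T11 T12 T13 T22 T23 T33 c1 c2 c3 d1 d2 d3 2] [:: u1; u2; u3].
Proof.
move=> H11 H12 H13 H22 H23 H33 c1 c2 c3 d1 d2 d3.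
rewrite mul_lcl /= !mul_lcr /= (mulC u2 u1) (mulC u3 u1) (mulC u3 u2) H11 H12 H13 H22 H23 H33.
rewrite !lc_cons !lc_nil ?scaler0 ?addr0.
pattern u1, u2, u3; apply: toV3; lcnorm; congr (lc _ _); congr [:: _; _; _]; rewrite /mco; ring.
Qed.

Lemma formabp a b : prim_axis_half mul a -> prim_axis_half mul b ->
  [/\ form a a = 1, form a (mul a b) = form a b, form b b = 1, form b (mul a b) = form a b
    & [/\ form (mul a b) a = form a b, form (mul a b) b = form a b &
       form (mul a b) (mul a b) = h * form a b + h * form a b * form a b]].
Proof.
move=> Ha Hb.
have aa : mul a a = a by case: Ha.
have bb : mul b b = b by case: Hb.
have [Eba Hap Hbp Hpp] := table Ha Hb.
have Faa : form a a = 1 by case: Hfr => _ _ _ ->.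
have Fbb : form b b = 1 by case: Hfr => _ _ _ ->.
have Fap : form a (mul a b) = form a b by rewrite -formA aa.
have Fbp : form b (mul a b) = form a b by rewrite mulC -formA bb.
split => //; split.
- by rewrite formA mulC.
- by rewrite formA bb.
- by rewrite formA Hbp formDr !formZr Fap; ring.
Qed.

Lemma indep3 a b x y z : prim_axis_half mul a -> prim_axis_half mul b ->
  form a b != 0 -> form a b != 1 ->
  lc [:: x; y; z] [:: a; b; mul a b] = 0 -> [/\ x = 0, y = 0 & z = 0].
Proof.
move=> Ha Hb Hn0 Hn1 H.
have [Faa Fap Fbb Fbp [Fpa Fpb Fpp]] := formabp Ha Hb.
have [Eba _ _ _] := table Ha Hb.
set al := form a b in Hn0 Hn1 Fap Fbp Fpa Fpb Fpp Eba.
have Ea : x + y * al + z * al = 0.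
  have := congr1 (form a) H; rewrite formr0 !lc_cons lc_nil addr0 !formDr !formZr Faa Fap /al => <-; ring.
have Eb : x * al + y + z * al = 0.
  have := congr1 (form b) H; rewrite formr0 !lc_cons lc_nil addr0 !formDr !formZr Fbb Fbp Eba /al => <-; ring.
have Ep : x * al + y * al + z * (h * al + h * al * al) = 0.
  have := congr1 (form (mul a b)) H; rewrite formr0 !lc_cons lc_nil addr0 !formDr !formZr Fpa Fpb Fpp /al => <-; ring.
have a1 : 1 - al != 0 by rewrite subr_eq0 eq_sym.
have Exy : x = y.
  have : (1 - al) * (x - y) = 0 by rewrite -[RHS](subrr 0) -{1}Ea -Eb; ring.
  by move/eqP; rewrite mulf_eq0 (negbTE a1) /= subr_eq0 => /eqP.
subst y.
have Ex : x = 0.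
  have : h * (1 - al) ^+ 2 * x = 0.
    rewrite -[RHS](subrr 0) -{1}(mulr0 (h * (1 + al))) -{1}Ea -Ep /Defs.half; by field.
  by move/eqP; rewrite !mulf_eq0 (negbTE h_neq0) (negbTE a1) /= => /eqP.
subst x.
have Ez : z = 0.
  by move: Ea; rewrite mul0r !add0r => /eqP; rewrite mulf_eq0 (negbTE Hn0) orbF => /eqP.
by [].
Qed.

Lemma mul_abp a b : prim_axis_half mul a -> prim_axis_half mul b ->
  forall x1 y1 z1 x2 y2 z2,
  mul (lc [:: x1; y1; z1] [:: a; b; mul a b]) (lc [:: x2; y2; z2] [:: a; b; mul a b]) =
  lc [:: mco [:: 1; 0; 0] [:: 0; 0; 1] [:: h * form a b; 0; h] [:: 0; 1; 0]
             [:: 0; h * form a b; h] [:: h * h * form a b; h * h * form a b; h * form a b]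
             x1 y1 z1 x2 y2 z2 0;
         mco [:: 1; 0; 0] [:: 0; 0; 1] [:: h * form a b; 0; h] [:: 0; 1; 0]
             [:: 0; h * form a b; h] [:: h * h * form a b; h * h * form a b; h * form a b]
             x1 y1 z1 x2 y2 z2 1;
         mco [:: 1; 0; 0] [:: 0; 0; 1] [:: h * form a b; 0; h] [:: 0; 1; 0]
             [:: 0; h * form a b; h] [:: h * h * form a b; h * h * form a b; h * form a b]
             x1 y1 z1 x2 y2 z2 2] [:: a; b; mul a b].
Proof.
move=> Ha Hb.
have aa : mul a a = a by case: Ha.
have bb : mul b b = b by case: Hb.
have [Eba Hap Hbp Hpp] := table Ha Hb.
apply: mulV3; rewrite /= !lc_cons lc_nil ?scale1r ?scale0r ?addr0 ?add0r //.
- by rewrite Hap addrC.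
- by rewrite Hbp addrC.
- by rewrite Hpp addrA.
Qed.

Lemma inJ_span a b e : prim_axis_half mul a -> prim_axis_half mul b ->
  inJ mul a b e -> exists x y z, e = lc [:: x; y; z] [:: a; b; mul a b].
Proof.
move=> Ha Hb He; apply: (He (fun u => exists x y z, u = lc [:: x; y; z] [:: a; b; mul a b])).
  split.
  - by exists 0, 0, 0; rewrite !lc_cons lc_nil !scale0r !addr0.
  - move=> u v [x1 [y1 [z1 ->]]] [x2 [y2 [z2 ->]]].
    by exists (x1 + x2), (y1 + y2), (z1 + z2); rewrite lcD.
  - move=> c u [x1 [y1 [z1 ->]]].
    by exists (c * x1), (c * y1), (c * z1); rewrite lcZ.
  - move=> u v [x1 [y1 [z1 ->]]] [x2 [y2 [z2 ->]]].
    by rewrite mul_abp //; do 3 eexists.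
move=> u [->|->].
- by exists 1, 0, 0; rewrite !lc_cons lc_nil scale1r !scale0r !addr0.
- by exists 0, 1, 0; rewrite !lc_cons lc_nil scale1r !scale0r !addr0 add0r.
Qed.
End Alg.



Section Main.
Variables (F : fieldType) (A : lmodType F) (mul : A -> A -> A) (form : A -> A -> F).
Variables (a b : A) (zeta : F).
Hypothesis Hcb : comm_bilinear_product mul.
Hypothesis Hfr : frobenius_form mul form.
Hypothesis H2 : (2%:R : F) != 0.
Hypothesis Ha : prim_axis_half mul a.
Hypothesis Hb : prim_axis_half mul b.
Hypothesis Hn0 : form a b != 0.
Hypothesis Hn1 : form a b != 1.
Hypothesis Hz : zeta ^+ 2 - (4%:R * form a b - 2%:R) * zeta + 1 = 0.
Local Notation h := (Defs.half F).
Local Notation s := (s_el mul form a b zeta).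
Local Notation t := (t_el mul form a b zeta).
Local Notation o := (oneJ mul form a b).
Local Notation al := (form a b).

Lemma four_neq0 : (4%:R : F) != 0.
Proof. by rewrite (_ : 4%:R = 2%:R * 2%:R) ?mulf_neq0 // -natrM. Qed.

Lemma z_neq0 : zeta != 0.
Proof.
apply/eqP => E; move: Hz; rewrite E expr0n /= mulr0 subrr add0r => /eqP.
by rewrite oner_eq0.
Qed.

Lemma Hal : al = (zeta + 1) ^+ 2 / (4%:R * zeta).
Proof.
have E : (zeta + 1) ^+ 2 = al * (4%:R * zeta).
  by apply/eqP; rewrite -subr_eq0; apply/eqP; rewrite -Hz; ring.
by rewrite E mulfK // mulf_neq0 ?four_neq0 ?z_neq0.
Qed.

Lemma zm1 : zeta - 1 != 0.
Proof.
apply/eqP => E; have E1 : zeta = 1 by apply/eqP; rewrite -subr_eq0 E.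
move: Hn1; rewrite Hal E1 => /eqP; apply.
rewrite (_ : (1 + 1 : F) ^+ 2 = 4%:R * 1); first by rewrite mulfV // mulf_neq0 ?four_neq0 ?oner_neq0.
by rewrite mulr1; ring.
Qed.

Lemma zp1 : zeta + 1 != 0.
Proof.
apply/eqP => E; move: Hn0; rewrite Hal E expr0n /= mul0r; by rewrite eqxx.
Qed.


Local Notation ks := ((4%:R * (al - 1))^-1).
Local Notation kt := ((al * (al - 1))^-1).
Local Notation k1 := (2%:R / (al - 1)).
Local Notation mu' := (Defs.mu zeta).
Local Notation nu' := (Defs.nu zeta).

Lemma Ls : s = lc [:: ks * mu'; ks * nu'; ks] [:: a; b; mul a b].
Proof.
rewrite /s_el /alpha; move: (form a b) (mul a b) => al' q.
rewrite !lc_cons lc_nil addr0.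
pattern a, b, q; apply: toV3; lcnorm; congr (lc _ _); congr [:: _; _; _]; ring.
Qed.

Lemma Lt : t = lc [:: kt * nu'; kt * mu'; kt] [:: a; b; mul a b].
Proof.
rewrite /t_el /alpha; move: (form a b) (mul a b) => al' q.
rewrite !lc_cons lc_nil addr0.
pattern a, b, q; apply: toV3; lcnorm; congr (lc _ _); congr [:: _; _; _]; ring.
Qed.

Lemma Lo : o = lc [:: - (k1 * h); - (k1 * h); k1] [:: a; b; mul a b].
Proof.
rewrite /oneJ /alpha; move: (form a b) (mul a b) => al' q.
rewrite !lc_cons lc_nil addr0.
pattern a, b, q; apply: toV3; lcnorm; congr (lc _ _); congr [:: _; _; _]; ring.
Qed.

Lemma W_abp c0 c1 c2 : lc [:: c0; c1; c2] [:: s; o; t] =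
  lc [:: c0 * (ks * mu') + c1 * - (k1 * h) + c2 * (kt * nu');
         c0 * (ks * nu') + c1 * - (k1 * h) + c2 * (kt * mu');
         c0 * ks + c1 * k1 + c2 * kt] [:: a; b; mul a b].
Proof.
rewrite Ls Lo Lt; move: (form a b) (mul a b) => al' q.
rewrite !lc_cons !lc_nil ?scaler0 ?addr0.
pattern a, b, q; apply: toV3; lcnorm; congr (lc _ _); congr [:: _; _; _]; ring.
Qed.

Lemma Hd1 : (zeta + 1) ^+ 2 + -1 * (4%:R * zeta) != 0.
Proof. rewrite (_ : (zeta + 1) ^+ 2 + -1 * (4%:R * zeta) = (zeta - 1) ^+ 2); [by rewrite expf_neq0 ?zm1 | ring]. Qed.

Lemma Hd2 : - (1 + zeta) * zeta - - (zeta + 1) != 0.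
Proof.
rewrite (_ : - (1 + zeta) * zeta - - (zeta + 1) = (zeta + 1) * (- (zeta - 1))); last by ring.
by rewrite mulf_neq0 ?oppr_eq0 ?zp1 ?zm1.
Qed.
Lemma Hd3 : 4%:R * zeta - (zeta + 1) ^+ 2 != 0.
Proof.
rewrite (_ : 4%:R * zeta - (zeta + 1) ^+ 2 = - (zeta - 1) ^+ 2); last by ring.
by rewrite oppr_eq0 expf_neq0 ?zm1.
Qed.

Ltac fld := rewrite /mco /= Hal /Defs.mu /Defs.nu /Defs.half; field;
  rewrite ?four_neq0 ?z_neq0 ?zp1 ?zm1 ?H2 ?Hd1 ?Hd2 ?Hd3 //.

Lemma Tss : mul s s = lc [:: [:: 0; 0; 0]`_0; [:: 0; 0; 0]`_1; [:: 0; 0; 0]`_2] [:: s; o; t].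
Proof.
rewrite W_abp Ls (mul_abp Hcb Hfr H2 Ha Hb); congr (lc _ _); congr [:: _; _; _]; fld.
Qed.

Lemma Tso : mul s o = lc [:: [:: 1; 0; 0]`_0; [:: 1; 0; 0]`_1; [:: 1; 0; 0]`_2] [:: s; o; t].
Proof.
rewrite W_abp Ls Lo (mul_abp Hcb Hfr H2 Ha Hb); congr (lc _ _); congr [:: _; _; _]; fld.
Qed.

Lemma Tst : mul s t = lc [:: [:: 0; h * h * h; 0]`_0; [:: 0; h * h * h; 0]`_1; [:: 0; h * h * h; 0]`_2] [:: s; o; t].
Proof.
rewrite W_abp Ls Lt (mul_abp Hcb Hfr H2 Ha Hb); congr (lc _ _); congr [:: _; _; _]; fld.
Qed.

Lemma Too : mul o o = lc [:: [:: 0; 1; 0]`_0; [:: 0; 1; 0]`_1; [:: 0; 1; 0]`_2] [:: s; o; t].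
Proof.
rewrite W_abp Lo (mul_abp Hcb Hfr H2 Ha Hb); congr (lc _ _); congr [:: _; _; _]; fld.
Qed.

Lemma Tot : mul o t = lc [:: [:: 0; 0; 1]`_0; [:: 0; 0; 1]`_1; [:: 0; 0; 1]`_2] [:: s; o; t].
Proof.
rewrite W_abp Lo Lt (mul_abp Hcb Hfr H2 Ha Hb); congr (lc _ _); congr [:: _; _; _]; fld.
Qed.

Lemma Ttt : mul t t = lc [:: [:: 0; 0; 0]`_0; [:: 0; 0; 0]`_1; [:: 0; 0; 0]`_2] [:: s; o; t].
Proof.
rewrite W_abp Lt (mul_abp Hcb Hfr H2 Ha Hb); congr (lc _ _); congr [:: _; _; _]; fld.
Qed.

Lemma mulW c0 c1 c2 d0 d1 d2 :
  mul (lc [:: c0; c1; c2] [:: s; o; t]) (lc [:: d0; d1; d2] [:: s; o; t]) =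
  lc [:: c0 * d1 + c1 * d0; c1 * d1 + (c0 * d2 + c2 * d0) * (h * h * h); c1 * d2 + c2 * d1]
     [:: s; o; t].
Proof.
rewrite (mulV3 Hcb Tss Tso Tst Too Tot Ttt) /mco /=; congr (lc _ _); congr [:: _; _; _]; ring.
Qed.

Local Notation Lf0 x y z :=
  (((x + y + z) / 2%:R / (1 - al) + (x - y) / 2%:R / (mu' - nu')) / ks).
Local Notation Lf2 x y z :=
  (((x + y + z) / 2%:R / (1 - al) - (x - y) / 2%:R / (mu' - nu')) / kt).
Local Notation Lf1 x y z := ((z - (x + y + z) / (1 - al)) / k1).

Lemma span x y z : lc [:: x; y; z] [:: a; b; mul a b] =
  lc [:: Lf0 x y z; Lf1 x y z; Lf2 x y z] [:: s; o; t].
Proof.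
rewrite W_abp; congr (lc _ _); congr [:: _; _; _]; fld.
Qed.

Lemma Windep d0 d1 d2 : lc [:: d0; d1; d2] [:: s; o; t] = 0 -> [/\ d0 = 0, d1 = 0 & d2 = 0].
Proof.
rewrite W_abp => /(indep3 Hcb Hfr H2 Ha Hb Hn0 Hn1) [E0 E1 E2].
have K0 : d0 = Lf0 (d0 * (ks * mu') + d1 * - (k1 * h) + d2 * (kt * nu')) (d0 * (ks * nu') + d1 * - (k1 * h) + d2 * (kt * mu')) (d0 * ks + d1 * k1 + d2 * kt) by fld.
have K1 : d1 = Lf1 (d0 * (ks * mu') + d1 * - (k1 * h) + d2 * (kt * nu')) (d0 * (ks * nu') + d1 * - (k1 * h) + d2 * (kt * mu')) (d0 * ks + d1 * k1 + d2 * kt) by fld.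
have K2 : d2 = Lf2 (d0 * (ks * mu') + d1 * - (k1 * h) + d2 * (kt * nu')) (d0 * (ks * nu') + d1 * - (k1 * h) + d2 * (kt * mu')) (d0 * ks + d1 * k1 + d2 * kt) by fld.
rewrite E0 E1 E2 in K0 K1 K2.
by split; [rewrite K0 | rewrite K1 | rewrite K2]; ring.
Qed.

Lemma idem e : nontriv_idem_J mul form a b e ->
  exists c0 c2, e = lc [:: c0; h; c2] [:: s; o; t] /\ c0 * c2 = 1.
Proof.
case=> HJ ee en0 eno.
have [x [y [z Ee]]] := inJ_span Hcb Hfr H2 Ha Hb HJ.
rewrite span in Ee.
move: Ee; move: (Lf0 x y z) (Lf1 x y z) (Lf2 x y z) => c0 c1 c2 Ee; subst e.
move/eqP: ee; rewrite mulW -subr_eq0 lcN lcD /= => /eqP /Windep [E0 E1 E2].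
have [Hc|Hc] := eqVneq (2%:R * c1 - 1) 0.
  have Hc1 : c1 = h by rewrite /Defs.half; apply: (mulfI H2); rewrite mulfV // ; apply/eqP; rewrite -subr_eq0 Hc.
  subst c1; exists c0, c2; split => //.
  apply/eqP; rewrite -subr_eq0; apply/eqP.
  rewrite -(mulr0 4%:R) -E1 /Defs.half; field; by rewrite ?H2.
have Ec0 : c0 = 0.
  have : (2%:R * c1 - 1) * c0 = 0 by rewrite -E0; ring.
  by move/eqP; rewrite mulf_eq0 (negbTE Hc) /= => /eqP.
have Ec2 : c2 = 0.
  have : (2%:R * c1 - 1) * c2 = 0 by rewrite -E2; ring.
  by move/eqP; rewrite mulf_eq0 (negbTE Hc) /= => /eqP.
subst c0 c2.
have : c1 * (c1 - 1) = 0 by rewrite -E1; ring.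
move/eqP; rewrite mulf_eq0 => /orP [] /eqP E.
  by move: en0; rewrite E !lc_cons lc_nil !scale0r !addr0 eqxx.
have E' : c1 = 1 by apply/eqP; rewrite -subr_eq0 E.
by move: eno; rewrite E' !lc_cons lc_nil !scale0r scale1r !addr0 add0r eqxx.
Qed.
End Main.

Unset Implicit Arguments.
Set Strict Implicit.


Theorem proposition5p5 (F : closedFieldType) (A : lmodType F)
  (mul : A -> A -> A) (form : A -> A -> F) (a b : A) (zeta : F) :
  (2%:R : F) != 0 ->
  jordan_half_algebra mul ->
  frobenius_form mul form ->
  prim_axis_half mul a -> prim_axis_half mul b ->
  form a b != 0 -> form a b != (4%:R)^-1 -> form a b != 1 ->
  zeta ^+ 2 - (4%:R * form a b - 2%:R) * zeta + 1 = 0 ->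
  forall e e' : A,
    nontriv_idem_J mul form a b e -> nontriv_idem_J mul form a b e' ->
    exists xi : F, xi != 0 /\
      forall phi : A -> A, is_phi mul form a b zeta xi phi -> phi e = e'.
Proof.
move=> H2 HJ Hfr Ha Hb Hn0 _ Hn1 Hz e e' He He'.
have Hcb : comm_bilinear_product mul by case: HJ.
have [c0 [c2 [Ee Hc]]] := idem Hcb Hfr H2 Ha Hb Hn0 Hn1 Hz He.
have [d0 [d2 [Ee' Hd]]] := idem Hcb Hfr H2 Ha Hb Hn0 Hn1 Hz He'.
have c0n : c0 != 0 by apply/eqP => E; move: Hc; rewrite E mul0r => /eqP; rewrite eq_sym oner_eq0.
have d0n : d0 != 0 by apply/eqP => E; move: Hd; rewrite E mul0r => /eqP; rewrite eq_sym oner_eq0.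
have [xi Hxi] := @solve_monicpoly F 2 (fun i => if i == 0%N then c0 / d0 else 0) isT.
have Hx2 : xi ^+ 2 = c0 / d0.
  by rewrite Hxi !big_ord_recl big_ord0 /= expr0 mulr1 mul0r !addr0.
exists xi; split.
  apply/eqP => E; move: Hx2; rewrite E expr0n /= => /eqP.
  by rewrite eq_sym mulf_eq0 invr_eq0 (negbTE c0n) (negbTE d0n).
move=> phi [phiL phiG].
rewrite Ee Ee' (lc_map _ _ phiL) /=.
have Ps : phi (s_el mul form a b zeta) = xi ^ (Negz 1) *: s_el mul form a b zeta.
  by apply: phiG; exists 1; rewrite scale1r.
have Po : phi (oneJ mul form a b) = xi ^ (Posz 0) *: oneJ mul form a b.
  apply: phiG; exists 1, 0; split.
  - by move=> j _; rewrite (form0r Hfr).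
  - exact: (mulv0 Hcb).
  - exact: (mulv0 Hcb).
  - by rewrite scale1r addr0.
have Pt : phi (t_el mul form a b zeta) = xi ^ (Posz 2) *: t_el mul form a b zeta.
  by apply: phiG; exists 1; rewrite scale1r.
rewrite Ps Po Pt !lc_cons.
have -> : xi ^ (Negz 1) = (xi ^+ 2)^-1 by [].
have -> : xi ^ (Posz 0) = 1 by [].
have -> : xi ^ (Posz 2) = xi ^+ 2 by [].
rewrite Hx2 scale1r.
congr (_ + (_ + (_ + _))); rewrite !scalerA; congr (_ *: _); congr (_ / _).
- by rewrite invf_div mulrCA mulfV ?mulr1.
- rewrite (_ : c2 * (c0 / d0) = (c0 * c2) / d0); last by ring.
  by rewrite Hc mul1r; apply: (mulfI d0n); rewrite Hd mulfV.
Qed.
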